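(* Let $\{T^k\}_k$ be a nested sequence of trees satisfying the standing assumptions. The big bang condition holds if and only if there exists a nested sequence of trees $\tilde T^k$, with $\tilde T^k$ a restriction of $T^k$ for each $k$, such that $|\partial\tilde T^k|\to\infty$ and $\{\tilde T^k\}_k$ has vanishing spread.
   Context: Trees $T=(V,E,\rho,\ell)$ are finite rooted trees with positive edge lengths, viewed as metric objects; $\partial T$ is the leaf set and $\ell_\gamma$ the distance from the root to point $\gamma$. Restriction of $T$ to $L\subseteq\partial T$: the tree rooted at $\rho$ consisting of all points on paths from $\rho$ to leaves in $L$. Standing assumptions: $\{T^k\}_{k\ge1}$ nested with common root ($T^{k-1}$ is a restriction of $T^k$), $|\partial T^k|=k$, and uniformly bounded height $\sup_k\max_{x\in\partial T^k}\ell_x<\infty$. A sequence $\{\tilde T^k\}$ is nested if $\tilde T^{k-1}$ is a restriction of $\tilde T^k$. Truncation: $T(s)=\{\gamma:\ell_\gamma\le s\}$ with leaf set $\partial T(s)$. Big bang condition: for every $s>0$, $|\partial T^k(s)|\to\infty$ as $k\to\infty$. Spread: for leaves $x,y$, $\ell_{xy}$ is the length of the common part of the paths from $\rho$ to $x$ and to $y$; $\mathrm{Spr}(T)=\frac{\sum_{x\ne y}(\ell_{xy}\wedge1)}{|\partial T|(|\partial T|-1)}$, the sum over ordered pairs of distinct leaves. $\{T^k\}$ has vanishing spread if $\limsup_k\mathrm{Spr}(T^k)=0$. *)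

(* Defs.v *)
From Stdlib Require Import Reals List Arith ClassicalEpsilon.
Import ListNotations.
Open Scope R_scope.

(* A finite rooted metric tree T = (V,E,rho,l) spanned by its root and its
   leaves is determined, up to root-preserving isometry, by its leaf set and
   the matrix of "common lengths" l_{xy} (length of the common part of the
   paths from rho to x and to y); l_{xx} = l_x is the height of leaf x.
   Leaves carry labels in nat so that restrictions share leaves with the
   tree they are restricted from. *)
Record tree := mkTree {
  leaves : list nat;
  ov : nat -> nat -> R
}.

Definition ht (T : tree) (x : nat) : R := ov T x x.

(* Axioms of a tree metric seen from the root (Gromov products w.r.t. rho):
   these characterize finite rooted metric trees with positive edge lengths
   spanned by the root and the leaves. *)
Definition wf_tree (T : tree) : Prop :=
  NoDup (leaves T) /\
  (forall x y, In x (leaves T) -> In y (leaves T) -> ov T x y = ov T y x) /\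
  (forall x y, In x (leaves T) -> In y (leaves T) -> 0 <= ov T x y) /\
  (forall x y, In x (leaves T) -> In y (leaves T) -> ov T x y <= ht T x) /\
  (* a leaf is not on the path from the root to another leaf *)
  (forall x y, In x (leaves T) -> In y (leaves T) -> x <> y -> ov T x y < ht T x) /\
  (* four-point (tree) condition relative to the root *)
  (forall x y z, In x (leaves T) -> In y (leaves T) -> In z (leaves T) ->
     Rmin (ov T x y) (ov T y z) <= ov T x z).

Definition is_restriction (S T : tree) : Prop :=
  incl (leaves S) (leaves T) /\
  (forall x y, In x (leaves S) -> In y (leaves S) -> ov S x y = ov T x y).

(* Points of T: a point is given by a leaf x and a height t in [0, l_x]
   (the point at distance t from rho on the path to x). *)
Definition same_point (T : tree) (x : nat) (a : R) (y : nat) (b : R) : Prop :=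
  a = b /\ (x = y \/ a <= ov T x y).

(* The leaves of the truncation T(s) = {gamma : l_gamma <= s} are the points
   at height min(s, l_x) on the paths to the leaves x of T. *)
Definition same_trunc_leaf (T : tree) (s : R) (x y : nat) : Prop :=
  same_point T x (Rmin s (ht T x)) y (Rmin s (ht T y)).

Fixpoint count_classes (P : nat -> nat -> Prop) (l : list nat) : nat :=
  match l with
  | [] => 0%nat
  | x :: l' =>
      ((if excluded_middle_informative (Exists (P x) l') then 0 else 1)
       + count_classes P l')%nat
  end.

Definition n_trunc_leaves (T : tree) (s : R) : nat :=
  count_classes (same_trunc_leaf T s) (leaves T).

Definition big_bang (T : nat -> tree) : Prop :=
  forall s, 0 < s -> forall N : nat, exists K : nat, forall k : nat,
    (K <= k)%nat -> (N <= n_trunc_leaves (T k) s)%nat.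

Definition spread_sum (T : tree) : R :=
  fold_right Rplus 0
    (map (fun x => fold_right Rplus 0
       (map (fun y => if Nat.eq_dec x y then 0 else Rmin (ov T x y) 1)
            (leaves T)))
       (leaves T)).

Definition Spr (T : tree) : R :=
  spread_sum T / (INR (length (leaves T)) * (INR (length (leaves T)) - 1)).

(* limsup_k Spr(T^k) = 0; since Spr >= 0 this is: for all eps > 0,
   eventually Spr(T^k) <= eps. *)
Definition vanishing_spread (T : nat -> tree) : Prop :=
  forall eps, 0 < eps -> exists K : nat, forall k : nat,
    (K <= k)%nat -> Spr (T k) <= eps.

Definition tends_to_infty (u : nat -> nat) : Prop :=
  forall N : nat, exists K : nat, forall k : nat, (K <= k)%nat -> (N <= u k)%nat.

(* Main.v *)
Require Import Defs.
From Stdlib Require Import Reals List Arith Lia Lra ClassicalEpsilon Classical.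
Import ListNotations.
Open Scope R_scope.

Lemma cc_avoid (P : nat -> nat -> Prop) (D : list nat)
  (Hsym : forall x y, In x D -> In y D -> P x y -> P y x)
  (Htr : forall x y z, In x D -> In y D -> In z D -> P x y -> P y z -> P x z) :
  forall l B, incl l D -> incl B D -> (length B < count_classes P l)%nat ->
  exists x, In x l /\ forall b, In b B -> ~ P x b.
Proof.
  induction l as [|x l IH]; intros B HlD HBD Hlt; simpl in Hlt.
  - lia.
  - destruct (excluded_middle_informative (Exists (P x) l)) as [He|Hne].
    + simpl in Hlt. destruct (IH B) as [x' [Hx' Hbb]]; auto.
      { intros z Hz; apply HlD; right; auto. }
      exists x'; split; [right|]; auto.
    + destruct (classic (exists b, In b B /\ P x b)) as [[b0 [Hb0 Pb0]]|Hno].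
      * destruct (IH (remove Nat.eq_dec b0 B)) as [x' [Hx' Hbb]].
        -- intros z Hz; apply HlD; right; auto.
        -- intros z Hz; apply HBD. eapply in_remove; eauto.
        -- pose proof (remove_length_lt Nat.eq_dec B b0 Hb0). simpl in Hlt; lia.
        -- exists x'; split; [right; auto|]. intros b Hb Pxb.
           destruct (Nat.eq_dec b b0) as [->|Hne'].
           ++ apply Hne. apply Exists_exists. exists x'. split; auto.
              assert (HxD : In x D) by (apply HlD; left; auto).
              assert (Hx'D : In x' D) by (apply HlD; right; auto).
              apply Htr with b0; auto.
           ++ apply (Hbb b); auto. apply in_in_remove; auto.
      * exists x; split; [left; auto|]. intros b Hb Pxb; apply Hno; eauto.
Qed.

Lemma cc_cover (P : nat -> nat -> Prop) (D : list nat)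
  (Hrefl : forall x, In x D -> P x x)
  (Htr : forall x y z, In x D -> In y D -> In z D -> P x y -> P y z -> P x z) :
  forall l, incl l D -> exists R, length R = count_classes P l /\ incl R l /\
    forall x, In x l -> exists r, In r R /\ P x r.
Proof.
  induction l as [|x l IH]; intros HlD.
  - exists []; simpl; repeat split; auto. intros z []. intros z [].
  - destruct IH as [R [HR1 [HR2 HR3]]]. { intros z Hz; apply HlD; right; auto. }
    simpl. destruct (excluded_middle_informative (Exists (P x) l)) as [He|Hne].
    + exists R; repeat split; auto.
      { intros z Hz; right; auto. }
      intros z [<-|Hz]; auto.
      apply Exists_exists in He. destruct He as [y [Hy Pxy]].
      destruct (HR3 y Hy) as [r [Hr Pyr]]. exists r; split; auto.
      apply Htr with y; auto. apply HlD; left; auto. apply HlD; right; auto.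
      apply HlD; right; auto.
    + exists (x :: R); repeat split; simpl; auto.
      { intros z [<-|Hz]; [left; auto|right; auto]. }
      intros z [<-|Hz].
      * exists x; split; [left; auto|]. apply Hrefl, HlD; left; auto.
      * destruct (HR3 z Hz) as [r [Hr Pr]]; exists r; auto.
Qed.

Section Trunc.
Variable T : tree.
Hypothesis Hw : wf_tree T.

Lemma stl_refl s x : same_trunc_leaf T s x x.
Proof. unfold same_trunc_leaf, same_point; auto. Qed.

Lemma stl_sym s x y : In x (leaves T) -> In y (leaves T) ->
  same_trunc_leaf T s x y -> same_trunc_leaf T s y x.
Proof.
  destruct Hw as [_ [Hs _]]. unfold same_trunc_leaf, same_point.
  intros Hx Hy [E [->|Hl]]; split; auto. right. rewrite Hs; auto. lra.
Qed.

Lemma stl_trans s x y z : In x (leaves T) -> In y (leaves T) -> In z (leaves T) ->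
  same_trunc_leaf T s x y -> same_trunc_leaf T s y z -> same_trunc_leaf T s x z.
Proof.
  destruct Hw as [_ [_ [_ [_ [_ H4]]]]]. unfold same_trunc_leaf, same_point.
  intros Hx Hy Hz [E1 [->|H1]] [E2 [->|H2]]; split; try lra; auto.
  right. pose proof (H4 x y z Hx Hy Hz).
  assert (Rmin s (ht T x) <= Rmin (ov T x y) (ov T y z)) by (apply Rmin_glb; lra). lra.
Qed.

Lemma stl_not s x b : In x (leaves T) -> In b (leaves T) ->
  ~ same_trunc_leaf T s x b -> x <> b /\ ov T x b < s.
Proof.
  destruct Hw as [_ [Hs [_ [Hh _]]]]. intros Hx Hb Hn. split.
  { intros ->; apply Hn, stl_refl. }
  destruct (Rlt_le_dec (ov T x b) s) as [|Hge]; auto. exfalso; apply Hn.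
  pose proof (Hh x b Hx Hb). pose proof (Hh b x Hb Hx). rewrite (Hs b x) in * by auto.
  unfold same_trunc_leaf, same_point.
  rewrite (Rmin_left s (ht T x)) by lra.
  rewrite (Rmin_left s (ht T b)) by lra.
  split; auto.
Qed.

Lemma stl_rel s x y : In x (leaves T) -> In y (leaves T) -> x <> y ->
  same_trunc_leaf T s x y -> Rmin s 1 <= Rmin (ov T x y) 1.
Proof.
  destruct Hw as [_ [_ [_ [_ [Hst _]]]]]. intros Hx Hy Hne [E [?|H]]; [congruence|].
  pose proof (Hst x y Hx Hy Hne).
  destruct (Rle_dec s (ht T x)) as [Hle|Hlt].
  - rewrite Rmin_left in H by auto. unfold Rmin; repeat destruct Rle_dec; lra.
  - rewrite Rmin_right in H by lra. lra.
Qed.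
End Trunc.

Lemma nest_gen (T : nat -> tree)
  (Hnest : forall k, (2 <= k)%nat -> is_restriction (T (k - 1)%nat) (T k)) :
  forall d k1, (1 <= k1)%nat ->
  incl (leaves (T k1)) (leaves (T (k1 + d)%nat)) /\
  forall x y, In x (leaves (T k1)) -> In y (leaves (T k1)) ->
    ov (T k1) x y = ov (T (k1 + d)%nat) x y.
Proof.
  induction d as [|d IH]; intros k1 Hk1.
  - rewrite Nat.add_0_r. split; [intros z Hz; auto|auto].
  - destruct (IH k1 Hk1) as [Hi Ho].
    destruct (Hnest (S (k1 + d))) as [Hi2 Ho2]; [lia|].
    replace (S (k1 + d) - 1)%nat with (k1 + d)%nat in * by lia.
    replace (k1 + S d)%nat with (S (k1 + d)) by lia.
    split.
    + intros z Hz; apply Hi2, Hi, Hz.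
    + intros x y Hx Hy. rewrite Ho by auto. apply Ho2; apply Hi; auto.
Qed.

Lemma nest_le (T : nat -> tree)
  (Hnest : forall k, (2 <= k)%nat -> is_restriction (T (k - 1)%nat) (T k)) :
  forall k1 k2, (1 <= k1)%nat -> (k1 <= k2)%nat ->
  incl (leaves (T k1)) (leaves (T k2)) /\
  forall x y, In x (leaves (T k1)) -> In y (leaves (T k1)) ->
    ov (T k1) x y = ov (T k2) x y.
Proof.
  intros k1 k2 H1 H2. replace k2 with (k1 + (k2 - k1))%nat by lia.
  apply nest_gen; auto.
Qed.

Definition rsum (l : list nat) (g : nat -> R) : R := fold_right Rplus 0 (map g l).

Lemma rsum_cons a l g : rsum (a :: l) g = g a + rsum l g.
Proof. reflexivity. Qed.

Lemma rsum_plus l g h : rsum l (fun x => g x + h x) = rsum l g + rsum l h.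
Proof. induction l; simpl; unfold rsum in *; simpl; [lra|]. rewrite IHl. lra. Qed.

Lemma rsum_le l g h : (forall x, In x l -> g x <= h x) -> rsum l g <= rsum l h.
Proof.
  induction l; intros H; unfold rsum in *; simpl; [lra|].
  apply Rplus_le_compat; [apply H; left; auto|apply IHl; intros; apply H; right; auto].
Qed.

Lemma rsum_const_le l g c : (forall x, In x l -> g x <= c) -> rsum l g <= INR (length l) * c.
Proof.
  induction l; intros H; unfold rsum in *; cbn [length map fold_right]; [simpl; lra|].
  rewrite S_INR. assert (g a <= c) by (apply H; left; auto).
  assert (fold_right Rplus 0 (map g l) <= INR (length l) * c) by (apply IHl; intros; apply H; right; auto).
  lra.
Qed.

Lemma rsum_const_ge l g c : (forall x, In x l -> c <= g x) -> INR (length l) * c <= rsum l g.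
Proof.
  induction l; intros H; unfold rsum in *; cbn [length map fold_right]; [simpl; lra|].
  rewrite S_INR. assert (c <= g a) by (apply H; left; auto).
  assert (INR (length l) * c <= fold_right Rplus 0 (map g l)) by (apply IHl; intros; apply H; right; auto).
  lra.
Qed.

Lemma rsum_filter_le l g p : (forall x, In x l -> 0 <= g x) -> rsum (filter p l) g <= rsum l g.
Proof.
  induction l; intros H; simpl; [unfold rsum; simpl; lra|].
  assert (0 <= g a) by (apply H; left; auto).
  assert (rsum (filter p l) g <= rsum l g) by (apply IHl; intros; apply H; right; auto).
  destruct (p a); rewrite ?rsum_cons; lra.
Qed.

Lemma rsum_nodup_ge l g x d : NoDup l -> In x l -> g x = 0 ->
  (forall y, In y l -> y <> x -> d <= g y) -> (INR (length l) - 1) * d <= rsum l g.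
Proof.
  induction l as [|a l IH]; intros Hnd Hx Hg H; [destruct Hx|].
  inversion Hnd as [|? ? Hna Hnd']; subst.
  rewrite rsum_cons. change (length (a :: l)) with (S (length l)). rewrite S_INR.
  destruct (Nat.eq_dec a x) as [->|Hne].
  - assert (INR (length l) * d <= rsum l g).
    { apply rsum_const_ge. intros y Hy. apply H; [right; auto|]. intros ->; contradiction. }
    lra.
  - destruct Hx as [->|Hx]; [congruence|].
    assert ((INR (length l) - 1) * d <= rsum l g).
    { apply IH; auto. intros y Hy Hyx; apply H; auto. right; auto. }
    assert (d <= g a) by (apply H; [left; auto|auto]). lra.
Qed.

Fixpoint nsum (l : list nat) (f : nat -> nat) : nat :=
  match l with [] => 0%nat | a :: l' => (f a + nsum l' f)%nat end.

Lemma nsum_plus l f g : nsum l (fun r => f r + g r)%nat = (nsum l f + nsum l g)%nat.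
Proof. induction l; simpl; lia. Qed.

Lemma nsum_ext l f g : (forall r, f r = g r) -> nsum l f = nsum l g.
Proof. intros H; induction l; simpl; auto. Qed.

Lemma nsum_in l f r : In r l -> (f r <= nsum l f)%nat.
Proof. induction l; simpl; [intros []|intros [->|H]]; [lia|]. specialize (IHl H); lia. Qed.

Lemma nsum_bound l f b : (forall r, In r l -> (f r <= b)%nat) -> (nsum l f <= length l * b)%nat.
Proof.
  induction l; simpl; intros H; [lia|].
  assert (f a <= b)%nat by (apply H; left; auto).
  assert (nsum l f <= length l * b)%nat by (apply IHl; intros; apply H; right; auto). lia.
Qed.

Lemma nmax (l : list nat) (f : nat -> nat) : l <> [] -> exists r, In r l /\ forall r', In r' l -> (f r' <= f r)%nat.
Proof.
  induction l as [|a l IH]; intros Hne; [congruence|].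
  destruct l as [|b l'].
  - exists a; split; [left; auto|]. intros r' [<-|[]]; lia.
  - destruct IH as [r [Hr Hm]]; [discriminate|].
    destruct (le_lt_dec (f a) (f r)).
    + exists r; split; [right; auto|]. intros r' [<-|H]; auto.
    + exists a; split; [left; auto|]. intros r' [<-|H]; [lia|]. specialize (Hm r' H); lia.
Qed.

Definition cand (T : nat -> tree) (k : nat) (l : list nat) (a : nat) : Prop :=
  In a (leaves (T k)) /\ forall y, In y l -> a <> y /\ ov (T k) a y < / INR (S (length l)).

Definition step (T : nat -> tree) (k : nat) (l : list nat) : list nat :=
  match excluded_middle_informative (exists a, cand T k l a) with
  | left H => proj1_sig (constructive_indefinite_description _ H) :: l
  | right _ => l
  end.

Fixpoint Lseq (T : nat -> tree) (k : nat) : list nat :=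
  match k with O => [] | S k' => step T (S k') (Lseq T k') end.

Lemma step_spec T k l : step T k l = l \/ exists a, cand T k l a /\ step T k l = a :: l.
Proof.
  unfold step. destruct excluded_middle_informative as [H|H]; auto.
  right. destruct (constructive_indefinite_description _ H) as [a Ha]; simpl. eauto.
Qed.

Lemma step_grow T k l : (exists a, cand T k l a) -> length (step T k l) = S (length l).
Proof.
  intros H. unfold step. destruct excluded_middle_informative as [H0|n]; [reflexivity|contradiction].
Qed.

Fixpoint gd (f : nat -> nat -> R) (l : list nat) : Prop :=
  match l with [] => True
  | a :: l' => gd f l' /\ forall y, In y l' -> f a y < / INR (S (length l')) end.

Lemma gd_transfer f g l : gd f l -> (forall x y, In x l -> In y l -> f x y = g x y) -> gd g l.
Proof.
  induction l as [|a l IH]; simpl; [auto|]. intros [H1 H2] He. split.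
  - apply IH; auto.
  - intros y Hy. rewrite <- He; [auto|left; auto|right; auto].
Qed.

Definition tt (f : nat -> nat -> R) (x y : nat) : R :=
  if Nat.eq_dec x y then 0 else Rmin (f x y) 1.

Lemma rsum_swap_cons (f : nat -> nat -> R) a l1 l2 :
  rsum l1 (fun x => rsum (a :: l2) (f x)) = rsum l1 (fun x => f x a) + rsum l1 (fun x => rsum l2 (f x)).
Proof.
  rewrite <- rsum_plus. reflexivity.
Qed.

Lemma nat_frac n : INR n * / INR (S n) <= 1.
Proof.
  rewrite S_INR. pose proof (pos_INR n).
  replace (INR n * / (INR n + 1)) with (1 - / (INR n + 1)) by (field; lra).
  pose proof (Rinv_0_lt_compat (INR n + 1)). lra.
Qed.

Lemma spread_bound f l : NoDup l -> gd f l ->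
  (forall x y, In x l -> In y l -> f x y = f y x) ->
  rsum l (fun x => rsum l (tt f x)) <= 2 * INR (length l).
Proof.
  induction l as [|a l IH]; intros Hnd Hg Hs.
  - unfold rsum; simpl; lra.
  - inversion Hnd as [|? ? Hna Hnd']; subst. destruct Hg as [Hg1 Hg2].
    rewrite rsum_cons, !rsum_swap_cons, rsum_cons.
    change (length (a :: l)) with (S (length l)). rewrite S_INR.
    assert (tt f a a = 0) by (unfold tt; destruct Nat.eq_dec; congruence).
    assert (rsum l (tt f a) <= 1).
    { eapply Rle_trans; [apply rsum_const_le with (c := / INR (S (length l)))|apply nat_frac].
      intros y Hy. unfold tt. destruct Nat.eq_dec as [->|]; [contradiction|].
      pose proof (Hg2 y Hy). pose proof (Rmin_l (f a y) 1). lra. }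
    assert (rsum l (fun x => tt f x a) <= 1).
    { eapply Rle_trans; [apply rsum_const_le with (c := / INR (S (length l)))|apply nat_frac].
      intros y Hy. unfold tt. destruct Nat.eq_dec as [->|]; [contradiction|].
      pose proof (Hg2 y Hy). pose proof (Rmin_l (f y a) 1).
      rewrite (Hs y a) in * by (simpl; auto). lra. }
    assert (rsum l (fun x => rsum l (tt f x)) <= 2 * INR (length l)).
    { apply IH; auto. intros; apply Hs; right; auto. }
    lra.
Qed.

Section Constr.
Variable T : nat -> tree.
Hypothesis Hwf : forall k, (1 <= k)%nat -> wf_tree (T k).
Hypothesis Hnest : forall k, (2 <= k)%nat -> is_restriction (T (k - 1)%nat) (T k).

Lemma Lseq_prev k : (1 <= k)%nat ->
  incl (Lseq T (k - 1)) (leaves (T k)) /\ NoDup (Lseq T (k - 1)) /\ gd (ov (T k)) (Lseq T (k - 1))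
  -> True.
Proof. auto. Qed.

Lemma Lseq_inv k : incl (Lseq T k) (leaves (T k)) /\ NoDup (Lseq T k) /\ gd (ov (T k)) (Lseq T k).
Proof.
  induction k as [|k IH].
  - simpl. repeat split; auto. intros z []. constructor.
  - destruct IH as [Hi [Hn Hg]].
    assert (Hi' : incl (Lseq T k) (leaves (T (S k))) /\ gd (ov (T (S k))) (Lseq T k)).
    { destruct k as [|k']. { simpl. split; auto. intros z []. }
      destruct (nest_le T Hnest (S k') (S (S k'))) as [Hi2 Ho2]; try lia.
      split. intros z Hz; apply Hi2, Hi, Hz.
      apply gd_transfer with (ov (T (S k'))); auto. }
    destruct Hi' as [Hi' Hg'].
    simpl Lseq. destruct (step_spec T (S k) (Lseq T k)) as [->|[a [[Ha Hc] ->]]].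
    + repeat split; auto.
    + repeat split.
      * intros z [<-|Hz]; auto.
      * constructor; auto. intros Hin. destruct (Hc a Hin); congruence.
      * auto.
      * intros y Hy. apply Hc; auto.
Qed.

Lemma Lseq_mono k : incl (Lseq T k) (Lseq T (S k)) /\ (length (Lseq T k) <= length (Lseq T (S k)))%nat.
Proof.
  simpl Lseq. destruct (step_spec T (S k) (Lseq T k)) as [->|[a [_ ->]]].
  - split; auto. intros z Hz; auto.
  - split; [intros z Hz; right; auto|simpl; lia].
Qed.

Lemma Lseq_mono_le k k' : (k <= k')%nat -> (length (Lseq T k) <= length (Lseq T k'))%nat.
Proof.
  induction 1; auto. pose proof (proj2 (Lseq_mono m)). lia.
Qed.

Hypothesis Hbb : big_bang T.

Lemma Lseq_grow n : exists k, (n <= length (Lseq T k))%nat.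
Proof.
  induction n as [|n [k Hk]]. { exists 0%nat; lia. }
  destruct (classic (exists k', (S n <= length (Lseq T k'))%nat)) as [H|H]; auto.
  exfalso.
  assert (Hall : forall k', (length (Lseq T k') <= n)%nat).
  { intros k'. destruct (le_lt_dec (length (Lseq T k')) n); auto. exfalso; apply H; exists k'; lia. }
  assert (Hs : 0 < / INR (S n)) by (apply Rinv_0_lt_compat, lt_0_INR; lia).
  destruct (Hbb _ Hs (S n)) as [K0 HK0].
  set (m := S (Nat.max K0 k)).
  assert (Hlen : length (Lseq T m) = n).
  { pose proof (Hall m). pose proof (Lseq_mono_le k m ltac:(unfold m; lia)). lia. }
  assert (Hcnt := HK0 (S m) ltac:(unfold m; lia)).
  pose proof (Hwf (S m) ltac:(lia)) as Hw.
  destruct (Lseq_inv m) as [Hi _].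
  destruct (nest_le T Hnest m (S m)) as [Hi2 _]; try (unfold m; lia).
  destruct (cc_avoid (same_trunc_leaf (T (S m)) (/ INR (S n))) (leaves (T (S m))))
    with (l := leaves (T (S m))) (B := Lseq T m) as [x [Hx Hxb]].
  - intros; apply stl_sym; auto.
  - intros x0 y0 z0 ? ? ? ? ?; apply stl_trans with y0; auto.
  - intros z Hz; auto.
  - intros z Hz; apply Hi2, Hi, Hz.
  - unfold n_trunc_leaves in Hcnt. lia.
  - assert (Hc : cand T (S m) (Lseq T m) x).
    { split; auto. intros y Hy. rewrite Hlen.
      apply stl_not; auto. }
    pose proof (step_grow T (S m) (Lseq T m) (ex_intro _ x Hc)).
    pose proof (Hall (S m)). simpl Lseq in *. lia.
Qed.

End Constr.

Lemma spread_eq (S : tree) :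
  spread_sum S = rsum (leaves S) (fun x => rsum (leaves S) (tt (ov S) x)).
Proof. reflexivity. Qed.

Lemma pig (P : nat -> nat -> Prop) (R0 : list nat) : forall L0 : list nat,
  (forall x, In x L0 -> exists r, In r R0 /\ P x r) ->
  (length L0 <= nsum R0 (fun r => length (filter (fun x => if excluded_middle_informative (P x r) then true else false) L0)))%nat.
Proof.
  induction L0 as [|x L0 IH]; intros Hc; [simpl; lia|].
  rewrite (nsum_ext R0 _ (fun r => (if excluded_middle_informative (P x r) then 1 else 0) +
     length (filter (fun x => if excluded_middle_informative (P x r) then true else false) L0))%nat).
  2:{ intros r; simpl; destruct (excluded_middle_informative (P x r)); reflexivity. }
  rewrite nsum_plus.
  destruct (Hc x (or_introl eq_refl)) as [r [Hr Pr]].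
  pose proof (nsum_in R0 (fun r => if excluded_middle_informative (P x r) then 1 else 0)%nat r Hr) as Hin.
  cbv beta in Hin. destruct (excluded_middle_informative (P x r)); [|contradiction].
  assert (IH' := IH (fun z hz => Hc z (or_intror hz))).
  change (length (x :: L0)) with (S (length L0)). lia.
Qed.

Theorem mainTheorem3 (T : nat -> tree)
  (Hwf : forall k, (1 <= k)%nat -> wf_tree (T k))
  (Hnest : forall k, (2 <= k)%nat -> is_restriction (T (k - 1)%nat) (T k))
  (Hcard : forall k, (1 <= k)%nat -> length (leaves (T k)) = k)
  (Hbdd : exists H : R, forall k x, (1 <= k)%nat -> In x (leaves (T k)) ->
            ht (T k) x <= H) :
  big_bang T <->
  exists Tt : nat -> tree,
    (forall k, (1 <= k)%nat -> wf_tree (Tt k) /\ is_restriction (Tt k) (T k)) /\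
    (forall k, (2 <= k)%nat -> is_restriction (Tt (k - 1)%nat) (Tt k)) /\
    tends_to_infty (fun k => length (leaves (Tt k))) /\
    vanishing_spread Tt.
Proof.
  split.
  - intros Hbb.
    exists (fun k => mkTree (Lseq T k) (ov (T k))).
    split; [|split; [|split]].
    + intros k Hk. destruct (Lseq_inv T Hnest k) as [Hi [Hn Hg]].
      destruct (Hwf k Hk) as [_ [A [B [C [D E]]]]].
      split.
      * unfold wf_tree, ht; simpl. repeat split; auto; intros;
          first [apply A|apply B|apply C|apply D|apply E]; auto.
      * split; simpl; auto.
    + intros k Hk. split; simpl.
      * replace k with (S (k-1)) at 2 by lia. apply Lseq_mono.
      * intros x y Hx Hy. destruct (Hnest k Hk) as [_ Ho]. apply Ho;
          destruct (Lseq_inv T Hnest (k-1)) as [Hi _]; apply Hi; auto.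
    + intros N. destruct (Lseq_grow T Hwf Hnest Hbb N) as [K HK]. exists K. intros k Hk.
      simpl. pose proof (Lseq_mono_le T K k Hk). lia.
    + intros eps Heps.
      destruct (archimed_cor1 (eps/2)) as [N1 [HN1 HN1p]]; [lra|].
      destruct (Lseq_grow T Hwf Hnest Hbb (N1 + 2)) as [K HK]. exists K. intros k Hk.
      pose proof (Lseq_mono_le T K k Hk) as Hl.
      destruct (Lseq_inv T Hnest k) as [Hi [Hn Hg]].
      assert (Hk1 : (1 <= k)%nat). { destruct k; [simpl in *; lia|lia]. }
      destruct (Hwf k Hk1) as [_ [Hs _]].
      assert (Hb := spread_bound (ov (T k)) (Lseq T k) Hn Hg
                      (fun x y hx hy => Hs x y (Hi x hx) (Hi y hy))).
      unfold Spr. rewrite spread_eq. simpl leaves. simpl ov.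
      set (ss := rsum (Lseq T k) (fun x => rsum (Lseq T k) (tt (ov (T k)) x))) in *.
      assert (Hn2 : INR (N1 + 2) <= INR (length (Lseq T k))) by (apply le_INR; lia).
      set (n := INR (length (Lseq T k))) in *.
      rewrite plus_INR in Hn2. replace (INR 2) with 2 in Hn2 by (simpl; lra).
      assert (H1 : 1 <= INR N1) by (apply (le_INR 1 N1); lia).
      unfold Rdiv.
      apply Rle_trans with (2 * n * / (n * (n - 1))).
      { apply Rmult_le_compat_r; auto. left; apply Rinv_0_lt_compat; nra. }
      replace (2 * n * / (n * (n - 1))) with (2 * / (n - 1)) by (field; lra).
      assert (/ (n - 1) <= / INR N1) by (apply Rinv_le_contravar; lra).
      lra.
  - intros [Tt [H1 [H2 [H3 H4]]]] s Hs N.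
    destruct N as [|N']. { exists 0%nat; intros; lia. }
    set (NN := INR (S N')).
    set (s' := Rmin s 1).
    assert (Hs' : 0 < s') by (unfold s', Rmin; destruct Rle_dec; lra).
    assert (HNN : 1 <= NN) by (unfold NN; rewrite S_INR; pose proof (pos_INR N'); lra).
    set (eps := s' * / (4 * NN * NN)).
    assert (Heps : 0 < eps) by (unfold eps; apply Rmult_lt_0_compat; [lra| apply Rinv_0_lt_compat; nra]).
    destruct (H4 eps Heps) as [K1 HK1].
    destruct (H3 (2 * S N' + 2)%nat) as [K2 HK2].
    exists (Nat.max 1 (Nat.max K1 K2)). intros k Hk.
    destruct (le_lt_dec (S N') (n_trunc_leaves (T k) s)) as [|Hlt]; auto. exfalso.
    assert (Hk1 : (1 <= k)%nat) by lia.
    destruct (H1 k Hk1) as [Hwt [Hri Hro]].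
    pose proof (Hwf k Hk1) as HwT.
    destruct (cc_cover (same_trunc_leaf (T k) s) (leaves (T k))) with (l := leaves (T k))
      as [R0 [HR1 [HR2 HR3]]].
    { intros; apply stl_refl. }
    { intros x y z ? ? ? ? ?; apply stl_trans with y; auto. }
    { intros z Hz; auto. }
    pose proof (pig (same_trunc_leaf (T k) s) R0 (leaves (Tt k))
                  (fun x hx => HR3 x (Hri x hx))) as Hp.
    assert (HnL : (2 * S N' + 2 <= length (leaves (Tt k)))%nat) by (apply HK2; lia).
    assert (HRne : R0 <> []) by (intros ->; simpl in Hp; lia).
    destruct (nmax R0 (fun r => length (filter (fun x => if excluded_middle_informative (same_trunc_leaf (T k) s x r) then true else false) (leaves (Tt k)))) HRne) as [r0 [Hr0 Hmax]].
    pose proof (nsum_bound R0 _ _ Hmax) as Hb.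
    set (C := filter (fun x => if excluded_middle_informative (same_trunc_leaf (T k) s x r0) then true else false) (leaves (Tt k))) in *.
    assert (Hnc : (length (leaves (Tt k)) <= S N' * length C)%nat).
    { unfold n_trunc_leaves in Hlt. rewrite HR1 in Hb. nia. }
    destruct Hwt as [HnodL [_ [Hnn _]]].
    assert (Htt0 : forall x y, In x (leaves (Tt k)) -> In y (leaves (Tt k)) -> 0 <= tt (ov (Tt k)) x y).
    { intros; unfold tt; destruct Nat.eq_dec; [lra|]. apply Rmin_glb; [apply Hnn; auto|lra]. }
    assert (Hlow : INR (length C) * ((INR (length C) - 1) * s') <= spread_sum (Tt k)).
    { rewrite spread_eq.
      eapply Rle_trans; [|apply rsum_filter_le with (p := fun x => if excluded_middle_informative (same_trunc_leaf (T k) s x r0) then true else false)].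
      2:{ intros x hx. rewrite <- (Rmult_0_r (INR (length (leaves (Tt k))))). apply rsum_const_ge.
          intros; apply Htt0; auto. }
      fold C.
      eapply Rle_trans; [|apply rsum_le with (g := fun x => rsum C (tt (ov (Tt k)) x))].
      2:{ intros x hx. apply rsum_filter_le. intros; apply Htt0; auto. apply filter_In in hx; tauto. }
      apply rsum_const_ge. intros x hx.
      apply filter_In in hx. destruct hx as [hxL hxP].
      destruct (excluded_middle_informative (same_trunc_leaf (T k) s x r0)) as [Px|]; [|discriminate].
      apply rsum_nodup_ge with x.
      - apply NoDup_filter; auto.
      - apply filter_In; split; auto. destruct excluded_middle_informative; tauto.
      - unfold tt; destruct Nat.eq_dec; congruence.
      - intros y hy hyx. apply filter_In in hy. destruct hy as [hyL hyP].
        destruct (excluded_middle_informative (same_trunc_leaf (T k) s y r0)) as [Py|]; [|discriminate].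
        unfold tt. destruct Nat.eq_dec as [e|ne]; [congruence|].
        rewrite Hro by auto.
        apply stl_rel; auto.
        apply stl_trans with r0; auto. apply stl_sym; auto. }
    specialize (HK1 k ltac:(lia)). unfold Spr in HK1.
    set (ss := spread_sum (Tt k)) in *.
    assert (HnR : INR (2 * S N' + 2) <= INR (length (leaves (Tt k)))) by (apply le_INR; lia).
    assert (HcR : INR (length (leaves (Tt k))) <= INR (S N' * length C)) by (apply le_INR; lia).
    rewrite mult_INR in HcR. rewrite plus_INR, mult_INR in HnR.
    replace (INR 2) with 2 in HnR by (simpl; lra).
    fold NN in HcR, HnR.
    set (n := INR (length (leaves (Tt k)))) in *.
    set (c := INR (length C)) in *.
    assert (HD : 0 < n * (n - 1)) by nra.
    assert (A : ss <= eps * (n * (n - 1))).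
    { replace ss with (ss / (n * (n - 1)) * (n * (n - 1))) by (field; lra).
      apply Rmult_le_compat_r; lra. }
    assert (B : s' * (4 * NN * NN * (c * (c - 1))) <= s' * (n * (n - 1))).
    { replace (s' * (n * (n - 1))) with (4 * NN * NN * (eps * (n * (n - 1)))) by (unfold eps; field; lra).
      replace (s' * (4 * NN * NN * (c * (c - 1)))) with (4 * NN * NN * (c * ((c - 1) * s'))) by ring.
      apply Rmult_le_compat_l; [nra|lra]. }
    apply Rmult_le_reg_l in B; auto.
    set (X := NN * c) in *.
    replace (4 * NN * NN * (c * (c - 1))) with (4 * (X * X - NN * X)) in B by (unfold X; ring).
    assert (0 <= (X - n) * (X + n - NN)) by (apply Rmult_le_pos; lra).
    assert (0 < n * (3 * n - 4 * NN + 1)) by (apply Rmult_lt_0_compat; lra).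
    nra.
Qed.
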